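(* Let $a,b,c,d,e\in\mathbb C$ with $a\notin\mathbb Z$ and $e\notin\{0,-1,-2,\dots\}$. Then, as an identity of formal power series in $x,y$, $$H_2(a,b,c,d;e;x,y)=F(a,b;e;x)\,F(c,d;1-a;-y)+\sum_{k=1}^\infty\sum_{l=1}^k\frac{(-1)^{k+l}(k-1)!}{(l-1)!\,l!\,(k-l)!}\,\frac{(b)_k(c)_l(d)_l}{(1-a)_l(e)_k}\,x^ky^l\,F(a+k,b+k;e+k;x)\,F(c+l,d+l;1-a+l;-y).$$
   Context: Pochhammer symbol: $(\lambda)_k=\Gamma(\lambda+k)/\Gamma(\lambda)$ for every integer $k$ (possibly negative) whenever defined; in particular $(\lambda)_0=1$ and $(\lambda)_k=\lambda(\lambda+1)\cdots(\lambda+k-1)$ for $k\ge1$. Gauss function $F(a,b;c;x)=\sum_{k\ge0}\frac{(a)_k(b)_k}{(c)_k k!}x^k$. Horn's function $H_2(a,b,c,d;e;x,y)=\sum_{p,q\ge0}\frac{(a)_{p-q}(b)_p(c)_q(d)_q}{(e)_p\,p!\,q!}x^py^q$. All functions are regarded as formal power series in $x,y$; products of functions are products of power series; the infinite double sum converges in the formal (degree) topology since its $(k,l)$ term has total degree at least $k+l$. *)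

(* Defs.v *)
(* Complex parameters: C is any numClosedFieldType
   (algebraically closed, char 0, with conjugation; e.g. algC). *)
From HB Require Import structures.
From mathcomp Require Import all_boot all_order all_algebra.
Set Implicit Arguments. Unset Strict Implicit. Unset Printing Implicit Defensive.
Import Order.TTheory GRing.Theory Num.Theory.
Local Open Scope ring_scope.

Section Defs.
Variable C : numClosedFieldType.

Definition poch (l : C) (n : nat) : C := \prod_(i < n) (l + i%:R).

(* Pochhammer symbol (lambda)_k for k : int, = Gamma(l+k)/Gamma(l);
   for k = -(n+1): 1 / ((l-1)(l-2)...(l-(n+1))) *)
Definition pochz (l : C) (k : int) : C :=
  match k with
  | Posz n => poch l n
  | Negz n => (\prod_(i < n.+1) (l - (i.+1)%:R))^-1
  end.

(* formal power series in x, y: coefficient of x^p y^q *)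
Definition fps2 := nat -> nat -> C.

Definition fps2_mul (f g : fps2) : fps2 := fun p q =>
  \sum_(i < p.+1) \sum_(j < q.+1) f i j * g (p - i)%N (q - j)%N.
Definition fps2_add (f g : fps2) : fps2 := fun p q => f p q + g p q.
Definition fps2_scale (s : C) (f : fps2) : fps2 := fun p q => s * f p q.
Definition fps2_zero : fps2 := fun _ _ => 0.
Definition fps2_mon (k l : nat) : fps2 := fun p q => ((p == k) && (q == l))%:R.
Definition fpsX (f : nat -> C) : fps2 := fun p q => if q == 0%N then f p else 0.
Definition fpsY (f : nat -> C) : fps2 := fun p q => if p == 0%N then f q else 0.
Definition fps_neg (f : nat -> C) : nat -> C := fun n => (-1) ^+ n * f n.

(* Sum of a family T k l of series, converging in the formal (degree)
   topology because T k l has total order >= k + l: the coefficient of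
   x^p y^q only receives contributions from (k,l) with k + l <= p + q. *)
Definition fps2_sum (T : nat -> nat -> fps2) : fps2 := fun p q =>
  \sum_(k < (p + q).+1) \sum_(l < (p + q).+1 | (k + l <= p + q)%N) T k l p q.

Definition gaussF (a b c : C) : nat -> C := fun n =>
  poch a n * poch b n / (poch c n * n`!%:R).

Definition H2 (a b c d e : C) : fps2 := fun p q =>
  pochz a (p%:Z - q%:Z) * poch b p * poch c q * poch d q
    / (poch e p * p`!%:R * q`!%:R).

Definition rhs_term (a b c d e : C) (k l : nat) : fps2 :=
  if (1 <= l <= k)%N then
    fps2_scale
      ((-1) ^+ (k + l)%N * (k.-1)`!%:R / ((l.-1)`!%:R * l`!%:R * (k - l)%N`!%:R)
        * (poch b k * poch c l * poch d l / (poch (1 - a) l * poch e k)))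
      (fps2_mul (fps2_mon k l)
         (fps2_mul (fpsX (gaussF (a + k%:R) (b + k%:R) (e + k%:R)))
                   (fpsY (fps_neg (gaussF (c + l%:R) (d + l%:R) (1 - a + l%:R))))))
  else fps2_zero.

End Defs.

(* Main.v *)
Require Import Defs.
From HB Require Import structures.
From mathcomp Require Import all_boot all_order all_algebra.
From mathcomp Require Import ring zify.
From Stdlib Require Import FunctionalExtensionality.
Import Order.TTheory GRing.Theory Num.Theory.
Local Open Scope ring_scope.

Lemma poch0 (C : numClosedFieldType) (x : C) : poch x 0 = 1.
Proof. by rewrite /poch big_ord0. Qed.

Lemma pochS (C : numClosedFieldType) (x : C) n : poch x n.+1 = poch x n * (x + n%:R).
Proof. by rewrite /poch big_ord_recr. Qed.

Lemma pochD (C : numClosedFieldType) (x : C) m n :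
  poch x (m + n) = poch x m * poch (x + m%:R) n.
Proof.
elim: n => [|n IH]; first by rewrite addn0 poch0 mulr1.
by rewrite addnS !pochS IH natrD addrA mulrA.
Qed.

Lemma poch_nz (C : numClosedFieldType) (x : C) n :
  (forall i : nat, x + i%:R != 0) -> poch x n != 0.
Proof.
move=> H; elim: n => [|n IH]; first by rewrite poch0 oner_neq0.
by rewrite pochS mulf_neq0.
Qed.

Lemma revpoch (C : numClosedFieldType) (x : C) n :
  \prod_(i < n) (x - i.+1%:R) = poch (x - n%:R) n.
Proof.
rewrite /poch (reindex_inj rev_ord_inj) /=; apply: eq_bigr => i _.
by rewrite subnSK // natrB ?(ltnW (ltn_ord i)); ring.
Qed.

Lemma pochN (C : numClosedFieldType) (x : C) n :
  poch (x - n%:R) n = (-1) ^+ n * poch (1 - x) n.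
Proof.
rewrite -revpoch /poch.
transitivity (\prod_(i < n) - (1 - x + i%:R)); last by rewrite prodrN card_ord.
apply: eq_bigr => i _; rewrite -addn1 natrD; ring.
Qed.

Lemma sgnK (C : numClosedFieldType) n : (-1) ^+ n * (-1) ^+ n = 1 :> C.
Proof. by rewrite -exprMn mulrNN mulr1 expr1n. Qed.


Lemma poch_vand (C : numClosedFieldType) (x y : C) n :
  poch (x + y) n = \sum_(k < n.+1) 'C(n, k)%:R * poch x k * poch y (n - k).
Proof.
elim: n => [|n IH]; first by rewrite big_ord1 !poch0 bin0 mulr1 mul1r.
rewrite pochS IH mulr_suml.
have E : forall k : 'I_n.+1, 'C(n, k)%:R * poch x k * poch y (n - k) * (x + y + n%:R) =
   'C(n, k)%:R * poch x k.+1 * poch y (n - k) + 'C(n, k)%:R * poch x k * poch y (n - k).+1.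
  move=> k; rewrite !pochS.
  have -> : n%:R = k%:R + (n - k)%:R :> C by rewrite -natrD subnKC // -ltnS.
  ring.
rewrite (eq_bigr _ (fun k _ => E k)) big_split /=.
rewrite [RHS]big_ord_recl /= bin0 subn0 poch0 mulr1 mul1r.
under [X in _ = _ + X]eq_bigr do rewrite /bump /= add1n binS natrD !mulrDl subSS.
rewrite big_split /= addrA [_ + \sum_(i < n.+1) _]addrC; congr (_ + _).
rewrite big_ord_recl /= bin0 subn0 poch0 mulr1 mul1r big_ord_recr /=.
rewrite bin_small // mul0r mul0r addr0; congr (_ + _).
by apply: eq_bigr => i _; rewrite /bump /= add1n subnSK.
Qed.


Lemma chu (C : numClosedFieldType) (x : C) p q :
  \sum_(k < p.+1) (-1) ^+ k * 'C(p, k)%:R * poch (q%:R) k * poch (x + k%:R) (p - k)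
  = poch (x - q%:R) p.
Proof.
have E1 : poch (x - q%:R) p = (-1) ^+ p * poch (1 - (x - q%:R + p%:R)) p.
  by rewrite -pochN addrK.
have E2 : forall k : 'I_p.+1, poch (x + k%:R) (p - k) =
   (-1) ^+ (p - k) * poch (1 - (x + p%:R)) (p - k).
  move=> k; have kp : (k <= p)%N by rewrite -ltnS.
  by rewrite -pochN natrB //; congr poch; ring.
rewrite E1 (_ : 1 - (x - q%:R + p%:R) = q%:R + (1 - (x + p%:R))); last by ring.
rewrite poch_vand mulr_sumr; apply: eq_bigr => k _.
rewrite E2.
have -> : (-1) ^+ p = (-1) ^+ k * (-1) ^+ (p - k) :> C by rewrite -exprD subnKC // -ltnS.
move: ((-1) ^+ k) ((-1) ^+ (p - k)) => s1 s2.
ring.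
Qed.


Lemma poch_fact (C : numClosedFieldType) n k :
  poch (n.+1%:R : C) k * n`!%:R = (n + k)`!%:R.
Proof.
elim: k => [|k IH]; first by rewrite poch0 mul1r addn0.
rewrite pochS mulrAC IH addnS factS natrM mulrC; congr (_ * _).
by rewrite -natrD addSn.
Qed.

Lemma fact_nz (C : numClosedFieldType) n : (n`!%:R : C) != 0.
Proof. by rewrite pnatr_eq0 -lt0n fact_gt0. Qed.

Lemma poch_bin (C : numClosedFieldType) q k :
  poch (q%:R : C) k = ('C(q + k.-1, k) * k`!)%:R.
Proof.
case: q => [|n].
  case: k => [|k]; first by rewrite poch0 bin0 fact0.
  rewrite (pochD _ _ 1 k) -[1%N]/(0.+1) pochS poch0 add0r mulr0 mul0r.
  by rewrite bin_small.
apply: (mulIf (fact_nz C n)); rewrite poch_fact.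
case: k => [|k]; first by rewrite bin0 fact0 mul1n mul1r addn0.
rewrite -natrM /= addSnnS -mulnA -(bin_fact (leq_addl n k.+1)) addnK.
by rewrite mulnA.
Qed.

Lemma sum_trunc (R : nmodType) (F : nat -> R) m n :
  (m <= n)%N -> (forall i, (m <= i < n)%N -> F i = 0) ->
  \sum_(i < n) F i = \sum_(i < m) F i.
Proof.
move=> mn H; rewrite -(subnKC mn) big_split_ord /= [X in _ + X]big1 ?addr0 // => i _.
apply: H; rewrite leq_addr /= -{2}(subnKC mn) ltn_add2l; exact: ltn_ord.
Qed.

Lemma vand1 k q : (0 < k)%N ->
  \sum_(l < q.+1) (if (1 <= l <= k)%N then 'C(q, l) * 'C(k.-1, k - l) else 0)%N
  = 'C(q + k.-1, k).
Proof.
move=> k0; rewrite -(binomial.Vandermonde q k.-1 k).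
set G := fun l => (if (1 <= l <= k)%N then 'C(q, l) * 'C(k.-1, k - l) else 0)%N.
rewrite -(@sum_trunc _ G q.+1 (q + k).+1) ?ltnS ?leq_addr //; last first.
  move=> i /andP [qi _]; rewrite /G; case: ifP => // _; by rewrite bin_small.
rewrite (@sum_trunc _ G k.+1 (q + k).+1) ?ltnS ?leq_addl //; last first.
  move=> i /andP [ki _]; rewrite /G ifF //; by rewrite (leqNgt i k) ki andbF.
apply: eq_bigr => i _; rewrite /G; case: (posnP i) => [->|i0].
  by rewrite subn0 bin0 mul1n bin_small // ltn_predL.
have ik : (i <= k)%N by rewrite -ltnS.
by rewrite ik.
Qed.


Lemma mul_XY (C : numClosedFieldType) (f g : nat -> C) p q :
  fps2_mul (fpsX f) (fpsY g) p q = f p * g q.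
Proof.
rewrite /fps2_mul (bigD1 ord_max) //= [X in _ + X]big1 ?addr0; last first.
  move=> i ni; apply: big1 => j _; rewrite /fpsY.
  have -> : (p - i == 0)%N = false.
    apply/negbTE; rewrite subn_eq0 -ltnNge ltn_neqAle -ltnS ltn_ord andbT.
    by apply: contra ni => /eqP h; apply/eqP/val_inj.
  by rewrite mulr0.
rewrite (bigD1 ord0) //= [X in _ + X]big1 ?addr0; last first.
  by move=> j nj; rewrite /fpsX ifF ?mul0r //; apply: contraNF nj => /eqP h; apply/eqP/val_inj.
by rewrite /fpsX /fpsY subnn subn0.
Qed.

Lemma mul_mon (C : numClosedFieldType) (G : fps2 C) k l p q :
  fps2_mul (fps2_mon C k l) G p q =
  if (k <= p)%N && (l <= q)%N then G (p - k)%N (q - l)%N else 0.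
Proof.
rewrite /fps2_mul /fps2_mon.
under eq_bigr do under eq_bigr do rewrite -mulnb natrM.
case: ifP => [/andP [kp lq]|H].
  rewrite (bigD1 (Ordinal (kp : (k < p.+1)%N))) //= [X in _ + X]big1 ?addr0; last first.
    move=> i ni; apply: big1 => j _.
    have -> : (nat_of_ord i == k) = false.
      by apply: contraNF ni => /eqP h; apply/eqP/val_inj.
    by rewrite !mul0r.
  rewrite (bigD1 (Ordinal (lq : (l < q.+1)%N))) //= [X in _ + X]big1 ?addr0; last first.
    move=> j nj.
    have -> : (nat_of_ord j == l) = false.
      by apply: contraNF nj => /eqP h; apply/eqP/val_inj.
    by rewrite !mulr0 mul0r.
  by rewrite !eqxx !mul1r.
apply: big1 => i _; apply: big1 => j _.
case: (eqVneq (nat_of_ord i) k) => [ei|]; last by rewrite !mul0r.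
case: (eqVneq (nat_of_ord j) l) => [ej|]; last by rewrite mulr0 mul0r.
have hi := ltn_ord i; have hj := ltn_ord j; rewrite ltnS in hi; rewrite ltnS in hj.
by move: H; rewrite -ei -ej hi hj.
Qed.

Set Implicit Arguments. Unset Strict Implicit.

Lemma nzA (C : numClosedFieldType) (a : C) (ha : forall z : int, a != z%:~R) m n :
  a + m%:R - n%:R != 0.
Proof.
have := ha (n%:Z - m%:Z); rewrite intrD intrN -!pmulrn; apply: contra => /eqP h.
by rewrite -subr_eq0; apply/eqP; rewrite -h; ring.
Qed.

Lemma poch_a_nz (C : numClosedFieldType) (a : C) (ha : forall z : int, a != z%:~R) k :
  poch a k != 0.
Proof. apply: poch_nz => i; have := nzA ha i 0; by rewrite subr0. Qed.

Lemma poch_1a_nz (C : numClosedFieldType) (a : C) (ha : forall z : int, a != z%:~R) k :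
  poch (1 - a) k != 0.
Proof.
apply: poch_nz => i; have := nzA ha 0 i.+1; rewrite -oppr_eq0; apply: contra => /eqP h.
by apply/eqP; rewrite -natr1 -h; ring.
Qed.

Lemma poch_ar_nz (C : numClosedFieldType) (a : C) (ha : forall z : int, a != z%:~R) r k :
  poch (a - r%:R) k != 0.
Proof.
apply: poch_nz => i; have := nzA ha i r; apply: contra => /eqP h.
by apply/eqP; rewrite -h; ring.
Qed.

Lemma pochz_eq (C : numClosedFieldType) (a : C) (ha : forall z : int, a != z%:~R) p q :
  pochz a (p%:Z - q%:Z) * poch (1 - a) q = (-1) ^+ q * poch (a - q%:R) p.
Proof.
case: (leqP q p) => qp.
  rewrite subzn //=.
  have -> : poch (a - q%:R) p = poch (a - q%:R) (q + (p - q)) by rewrite subnKC.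
  rewrite pochD subrK pochN mulrA mulrA sgnK mul1r mulrC //.
have -> : p%:Z - q%:Z = Negz (q - p).-1.
  rewrite NegzE prednK; last by rewrite subn_gt0.
  by rewrite -subzn ?opprB // ltnW.
rewrite /= prednK ?subn_gt0 // revpoch.
have E : poch (1 - a) q = (-1) ^+ q * poch (a - q%:R) q.
  by rewrite pochN mulrA sgnK mul1r.
rewrite E.
have -> : poch (a - q%:R) q = poch (a - q%:R) (p + (q - p)) by rewrite subnKC // ltnW.
rewrite pochD (_ : a - q%:R + p%:R = a - (q - p)%:R); last by rewrite natrB ?(ltnW qp) //; ring.
have nz := poch_ar_nz ha (q - p) (q - p).
move: ((-1) ^+ q) (poch (a - (q - p)%:R) (q - p)) nz => s P nz.
by field.
Qed.



Lemma poch_e_nz (C : numClosedFieldType) (e : C) (he : forall n : nat, e != - n%:R) m n :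
  poch (e + m%:R) n != 0.
Proof. apply: poch_nz => i; rewrite -addrA -natrD addr_eq0; exact: he. Qed.

Lemma poch_am_nz (C : numClosedFieldType) (a : C) (ha : forall z : int, a != z%:~R) m n :
  poch (a + m%:R) n != 0.
Proof. apply: poch_nz => i; have := nzA ha (m + i) 0; by rewrite subr0 natrD addrA. Qed.

Lemma poch_1am_nz (C : numClosedFieldType) (a : C) (ha : forall z : int, a != z%:~R) m n :
  poch (1 - a + m%:R) n != 0.
Proof.
apply: poch_nz => i; have := nzA ha 0 (m + i).+1; rewrite -oppr_eq0; apply: contra => /eqP h.
by apply/eqP; rewrite -natr1 natrD -h; ring.
Qed.

Lemma claim0 (C : numClosedFieldType) (a b c d e : C)
  (ha : forall z : int, a != z%:~R) (he : forall n : nat, e != - n%:R) p q :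
  fps2_mul (fpsX (gaussF a b e)) (fpsY (fps_neg (gaussF c d (1 - a)))) p q =
  poch b p * poch c q * poch d q / poch e p * poch a p * (-1) ^+ q
    / (poch (1 - a) q * p`!%:R * q`!%:R).
Proof.
rewrite mul_XY /fps_neg /gaussF.
have h1 := poch_1a_nz ha q. have h2 := fact_nz C p. have h3 := fact_nz C q.
have h4 : poch e p != 0 by have := poch_e_nz he 0 p; rewrite addr0.
move: ((-1) ^+ q) => s.
by field; repeat (apply/andP; split); assumption.
Qed.

Lemma claim1 (C : numClosedFieldType) (a b c d e : C)
  (ha : forall z : int, a != z%:~R) (he : forall n : nat, e != - n%:R) p q k l :
  (1 <= l <= k)%N -> (k <= p)%N -> (l <= q)%N ->
  rhs_term a b c d e k l p q =
  poch b p * poch c q * poch d q / poch e p * poch a p * (-1) ^+ q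
    / (poch (1 - a) q * p`!%:R * q`!%:R) *
  ((-1) ^+ k * 'C(p, k)%:R * k`!%:R / poch a k * ('C(q, l) * 'C(k.-1, k - l))%:R).
Proof.
move=> hlk kp lq; rewrite /rhs_term hlk /fps2_scale mul_mon kp lq /= mul_XY /fps_neg /gaussF.
have Ep : forall x : C, poch x p = poch x k * poch (x + k%:R) (p - k).
  by move=> x; rewrite -pochD subnKC.
have Eq : forall x : C, poch x q = poch x l * poch (x + l%:R) (q - l).
  by move=> x; rewrite -pochD subnKC.
rewrite !Ep !Eq.
case/andP: hlk => l1 lk.
have Fp := bin_fact kp. have Fq := bin_fact lq.
have Fk : 'C(k.-1, k - l) * ((k - l)`! * (l.-1)`!) = (k.-1)`!.
  have H1 : (k - l <= k.-1)%N by lia.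
  have H2 : (k.-1 - (k - l))%N = l.-1 by lia.
  by rewrite -(bin_fact H1) H2.
rewrite -Fp -Fq -Fk !natrM.
have Sk : (-1) ^+ (k + l) = (-1) ^+ k * (-1) ^+ l :> C by rewrite exprD.
have Sq : (-1) ^+ q = (-1) ^+ l * (-1) ^+ (q - l) :> C by rewrite -exprD subnKC.
rewrite Sk Sq.
have n1 := poch_a_nz ha k. have n2 := poch_1a_nz ha l. have n3 := poch_1am_nz ha l (q - l).
have n4 : poch e k != 0 by have := poch_e_nz he 0 k; rewrite addr0.
have n5 := poch_e_nz he k (p - k).
have n6 := poch_am_nz ha k (p - k).
have n7 : 'C(p, k)%:R != 0 :> C by rewrite pnatr_eq0 -lt0n bin_gt0.
have n8 : 'C(q, l)%:R != 0 :> C by rewrite pnatr_eq0 -lt0n bin_gt0.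
have n9 := fact_nz C k. have n10 := fact_nz C (p - k). have n11 := fact_nz C l.
have n12 := fact_nz C (q - l). have n13 := fact_nz C (k - l). have n14 := fact_nz C l.-1.
move: ((-1) ^+ k) ((-1) ^+ l) ((-1) ^+ (q - l)) => s1 s2 s3.
by field; repeat (apply/andP; split); assumption.
Qed.

Unset Implicit Arguments.
Set Strict Implicit.

Theorem mainTheorem2 (C : numClosedFieldType) (a b c d e : C)
  (ha : forall z : int, a != z%:~R)
  (he : forall n : nat, e != - n%:R) :
  H2 a b c d e =
  fps2_add
    (fps2_mul (fpsX (gaussF a b e)) (fpsY (fps_neg (gaussF c d (1 - a)))))
    (fps2_sum (rhs_term a b c d e)).
Proof.
apply: functional_extensionality => p; apply: functional_extensionality => q.
rewrite /fps2_add claim0 //.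
set K0 := _ / (_ * _ * _).
set T := rhs_term a b c d e.
have Z : forall k l, ~~ ((k <= p)%N && (l <= q)%N) -> T k l p q = 0.
  move=> k l H; rewrite /T /rhs_term; case: ifP => // _.
  by rewrite /fps2_scale mul_mon (negbTE H) mulr0.
have S1 : fps2_sum T p q = \sum_(k < p.+1) \sum_(l < q.+1) T k l p q.
  rewrite /fps2_sum.
  rewrite (eq_bigr (fun k : 'I_(p + q).+1 => \sum_(l < q.+1) T k l p q)); last first.
    move=> k _; rewrite big_mkcond /=.
    rewrite (@sum_trunc _ (fun l => if (k + l <= p + q)%N then T k l p q else 0) q.+1 (p + q).+1)
      ?ltnS ?leq_addl //; last first.
      move=> i /andP [qi _]; case: ifP => // _; apply: Z; by rewrite negb_and -!ltnNge qi orbT.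
    apply: eq_bigr => l _; case: ifP => // H; rewrite Z //; apply/negP => /andP [kp lq].
    by move: H; rewrite leq_add // -ltnS.
  rewrite (@sum_trunc _ (fun k => \sum_(l < q.+1) T k l p q) p.+1 (p + q).+1) ?ltnS ?leq_addr //.
  move=> i /andP [pi _]; apply: big1 => l _; apply: Z; by rewrite negb_and -ltnNge pi.
pose X k := (-1) ^+ k * 'C(p, k)%:R * k`!%:R / poch a k.
have S2 : \sum_(k < p.+1) \sum_(l < q.+1) T k l p q =
    K0 * \sum_(k < p.+1) (if (0 < k)%N then X k * 'C(q + k.-1, k)%:R else 0).
  rewrite mulr_sumr; apply: eq_bigr => k _.
  have kp : (k <= p)%N by rewrite -ltnS.
  case: (posnP k) => [k0|k0].
    rewrite k0 /= mulr0; apply: big1 => l _; rewrite /T /rhs_term.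
    by rewrite ifF //; apply/negbTE/negP => /andP []; lia.
  rewrite -(vand1 k q k0) natr_sum !mulr_sumr; apply: eq_bigr => l _.
  have lq : (l <= q)%N by rewrite -ltnS.
  case: ifP => H.
    by rewrite /T claim1 // /X.
  by rewrite /T /rhs_term H mulr0 mulr0.
rewrite S1 S2.
pose Y k := (-1) ^+ k * 'C(p, k)%:R * poch (q%:R : C) k / poch a k.
have S3 : 1 + \sum_(k < p.+1) (if (0 < k)%N then X k * 'C(q + k.-1, k)%:R else 0)
    = \sum_(k < p.+1) Y k.
  rewrite [RHS]big_ord_recl big_ord_recl /= /Y expr0 bin0 !poch0 invr1 !mulr1 add0r.
  congr (_ + _); apply: eq_bigr => i _.
  rewrite /X /bump /= ?add0n ?add1n poch_bin /= natrM.
  move: ((-1) ^+ i.+1) ((poch a i.+1)^-1) => s P.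
  ring.
have S4 : poch a p * \sum_(k < p.+1) Y k = poch (a - q%:R) p.
  rewrite -(@chu _ a p q) mulr_sumr; apply: eq_bigr => k _; rewrite /Y.
  have Ep : poch a p = poch a k * poch (a + k%:R) (p - k) by rewrite -pochD subnKC // -ltnS.
  rewrite Ep; have := poch_a_nz ha k.
  move: ((-1) ^+ k) (poch a k) => s P nz.
  by field.
have Ez : pochz a (p%:Z - q%:Z) = (-1) ^+ q * poch (a - q%:R) p / poch (1 - a) q.
  by rewrite -pochz_eq // mulfK // poch_1a_nz.
rewrite -{1}(mulr1 K0) -mulrDr S3 /K0 /H2 Ez -S4.
have h1 := poch_1a_nz ha q. have h2 := fact_nz C p. have h3 := fact_nz C q.
have h4 : poch e p != 0 by have := poch_e_nz he 0 p; rewrite addr0.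
move: ((-1) ^+ q) (\sum_(k < p.+1) Y k) => s SY.
by field; repeat (apply/andP; split); assumption.
Qed.
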